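(* Let $m,k$ be positive integers. Define on $\mathbb{F}_{2^m}\times\mathbb{F}_{2^m}$ \[f_1(x,y)=(x^{2^k+1}+xy^{2^k}+y^{2^k+1},\;x^{2^{2k}+1}+x^{2^{2k}}y+y^{2^{2k}+1}),\] \[f_2(x,y)=(x^{2^k+1}+xy^{2^k}+y^{2^k+1},\;x^{2^{3k}}y+xy^{2^{3k}}).\] If $\gcd(3k,m)=1$, then $f_1$ is an almost-3-to-1 APN map. If $\gcd(3k,m)=1$ and $m$ is odd, then $f_2$ is an almost-3-to-1 APN map.
   Context: A map $F$ on $\mathbb{F}_{2^m}\times\mathbb{F}_{2^m}$ (an $\mathbb{F}_2$-vector space) is APN if for every nonzero $a$ and every $b$ the equation $F(z+a)+F(z)=b$ has at most 2 solutions. $F$ is almost-3-to-1 if there is a unique element of its image with exactly one preimage and every other element of the image has exactly 3 preimages. *)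

(* Defs.v *)
From mathcomp Require Import all_boot all_algebra all_field.
Set Implicit Arguments. Unset Strict Implicit. Unset Printing Implicit Defensive.
Import GRing.Theory.
Local Open Scope ring_scope.

Definition APN2 (F : finFieldType) (f : F * F -> F * F) : Prop :=
  forall (a b : F * F), (a != 0)%R ->
    (#|[set z : F * F | ((f (z + a)) + f z)%R == b]| <= 2)%N.

Definition almost_3_to_1 (T : finType) (f : T -> T) : Prop :=
  exists y0 : T,
    [/\ y0 \in codom f,
        #|[set z | f z == y0]| = 1%N &
        forall y, y \in codom f -> y != y0 -> #|[set z | f z == y]| = 3%N].

Definition f1 (F : finFieldType) (k : nat) (p : F * F) : F * F :=
  let: (x, y) := p in
  (x ^+ (2 ^ k + 1) + x * y ^+ (2 ^ k) + y ^+ (2 ^ k + 1),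
   x ^+ (2 ^ (2 * k) + 1) + x ^+ (2 ^ (2 * k)) * y + y ^+ (2 ^ (2 * k) + 1)).

Definition f2 (F : finFieldType) (k : nat) (p : F * F) : F * F :=
  let: (x, y) := p in
  (x ^+ (2 ^ k + 1) + x * y ^+ (2 ^ k) + y ^+ (2 ^ k + 1),
   x ^+ (2 ^ (3 * k)) * y + x * y ^+ (2 ^ (3 * k))).

(* Main.v *)
Require Import Defs.
From mathcomp Require Import all_boot all_algebra all_field.
From mathcomp Require Import ring zify.
Set Implicit Arguments. Unset Strict Implicit. Unset Printing Implicit Defensive.
Import GRing.Theory.
Local Open Scope ring_scope.

Lemma char2E (F : fieldType) (x y r : F) : (2%:R : F) = 0 -> x = y + 2%:R * r -> x = y.
Proof. by move=> h ->; rewrite h mul0r addr0. Qed.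

Lemma oppc2 (F : fieldType) (h : (2%:R : F) = 0) (y : F) : - y = y.
Proof. by apply: (char2E (r := - y)) => //; ring. Qed.

Lemma c2eq (F : fieldType) (h : (2%:R : F) = 0) (x y : F) : x + y = 0 -> x = y.
Proof. by move/eqP; rewrite addr_eq0 oppc2 // => /eqP. Qed.

Lemma c2eq' (F : fieldType) (h : (2%:R : F) = 0) (x y : F) : x = y -> x + y = 0.
Proof. move=> ->; apply: (char2E (r := y)) => //; ring. Qed.

Lemma frD (F : fieldType) (h : (2%:R : F) = 0) n (x y : F) :
  (x + y) ^+ (2 ^ n) = x ^+ (2 ^ n) + y ^+ (2 ^ n).
Proof.
elim: n x y => [|n IH] x y; first by rewrite !expr1.
rewrite expnSr !exprM IH.
by apply: (char2E (r := x ^+ (2 ^ n) * y ^+ (2 ^ n))) => //; ring.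
Qed.

Lemma frfr (F : ringType) a b (x : F) : (x ^+ (2 ^ a)) ^+ (2 ^ b) = x ^+ (2 ^ (a + b)).
Proof. by rewrite -exprM -expnD. Qed.

Lemma fr1 (F : ringType) n : (1 : F) ^+ n = 1.
Proof. exact: expr1n. Qed.

Lemma zero_one (F : fieldType) (x : F) : x ^+ 2 = x -> x = 0 \/ x = 1.
Proof.
move=> hx; have : x * (x - 1) = 0 by rewrite mulrBr mulr1 -expr2 hx subrr.
move/eqP; rewrite mulf_eq0 => /orP [/eqP -> | ]; first by left.
by rewrite subr_eq0 => /eqP ->; right.
Qed.

Lemma card_char2 (F : finFieldType) m : #|F| = (2 ^ m)%N -> (0 < m)%N -> (2%:R : F) = 0.
Proof.
move=> hc hm.
have := card_finPcharP hc (isT : prime 2).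
by move=> /andP [_ /eqP].
Qed.

Lemma fixF (F : finFieldType) m j (x : F) : #|F| = (2 ^ m)%N -> (0 < j)%N ->
  coprime j m -> x ^+ (2 ^ j) = x -> x ^+ 2 = x.
Proof.
move=> hc hj hco hx.
have hm : x ^+ (2 ^ m) = x by rewrite -hc expf_card.
have iter : forall a b, x ^+ (2 ^ b) = x -> x ^+ (2 ^ (a * b)) = x.
  move=> a b hb; elim: a => [|a IH]; first by rewrite mul0n expr1.
  by rewrite mulSn expnD exprM hb IH.
case: (egcdnP m hj) => km kn hkm _.
rewrite (eqP hco) in hkm.
have := iter km j hx; rewrite hkm expnD expn1 exprM iter //.
Qed.

Lemma sqfr (F : ringType) n (x : F) : (x ^+ 2) ^+ n = (x ^+ n) ^+ 2.
Proof. exact: exprAC. Qed.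

Ltac push h := repeat (rewrite (frD h) || rewrite exprMn || rewrite expr1n || rewrite frfr || rewrite sqfr || rewrite exprVn).
Ltac pushH h H := repeat (rewrite (frD h) in H || rewrite exprMn in H || rewrite expr1n in H || rewrite frfr in H || rewrite sqfr in H || rewrite exprVn in H).

Lemma fix2 (F : ringType) (x : F) j : x ^+ 2 = x -> x ^+ (2 ^ j) = x.
Proof.
move=> hx; elim: j => [|j IH]; first by rewrite expr1.
by rewrite expnS exprM hx IH.
Qed.

Lemma aniso_d (F : finFieldType) m j (d : F) : #|F| = (2 ^ m)%N -> (0 < m)%N ->
  (0 < j)%N -> coprime (3 * j) m -> d ^+ (2 ^ j) * d + d + 1 != 0.
Proof.
move=> hc hm hj hco; apply/negP => /eqP H.
have h := card_char2 hc hm.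
set e := (2 ^ j)%N in H.
set t := d ^+ e in H.
have td : t * d = d + 1 by apply: c2eq => //; rewrite addrA.
have frob : forall (a b : F), a * b = b + 1 -> a ^+ e * b ^+ e = b ^+ e + 1.
  by move=> a b hab; rewrite -exprMn hab frD // expr1n.
set u := t ^+ e. set v := u ^+ e.
have ut : u * t = t + 1 by exact: frob.
have vu : v * u = u + 1 by exact: frob.
have t1d : (t + 1) * d = 1.
  rewrite mulrDl td mul1r; apply: (char2E (r := d)) => //; ring.
have vt1 : v * (t + 1) = 1.
  rewrite -ut mulrA vu mulrDl mul1r ut; apply: (char2E (r := t)) => //; ring.
have t10 : t + 1 != 0 by apply/negP => /eqP e0; move: t1d; rewrite e0 mul0r => /eqP; rewrite eq_sym oner_eq0.
have vd : v = d.
  apply: (mulIf t10); rewrite vt1 mulrC t1d //.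
have hv : v = d ^+ (2 ^ (3 * j)).
  by rewrite /v /u /t /e !frfr; congr (_ ^+ (2 ^ _)); lia.
have d2 : d ^+ 2 = d by apply: (fixF hc _ hco); rewrite ?muln_gt0 // -hv vd.
case: (zero_one d2) => d0; move: H; rewrite /t /e d0 ?expr0n ?expr1n /=.
- rewrite (_ : (2 ^ j == 0)%N = false) ?mul0r ?add0r ?oner_eq0 => [/eqP|]; last by rewrite expn_eq0.
  by rewrite oner_eq0.
- rewrite mul1r => H; have e1 : (1 : F) = 1 + 1 + 1 by apply: (char2E (r := -1)) => //; ring.
  by move: H; rewrite -e1 => /eqP; rewrite oner_eq0.
Qed.

Lemma aniso_uv (F : finFieldType) m j (u v : F) : #|F| = (2 ^ m)%N -> (0 < m)%N ->
  (0 < j)%N -> coprime (3 * j) m ->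
  u ^+ (2 ^ j) * u + u * v ^+ (2 ^ j) + v ^+ (2 ^ j) * v = 0 -> u = 0 /\ v = 0.
Proof.
move=> hc hm hj hco H.
have e0 : (2 ^ j)%N != 0%N by rewrite expn_eq0.
have [v0|vn0] := eqVneq v 0.
  move: H; rewrite v0 expr0n (negbTE e0) !mulr0 !addr0 => /eqP.
  rewrite mulf_eq0 expf_eq0 => /orP [/andP [_ /eqP ->] | /eqP ->]; by split.
have := aniso_d (u / v) hc hm hj hco.
have vq0 : v ^+ (2 ^ j) != 0 by rewrite expf_neq0.
have -> : (u / v) ^+ (2 ^ j) * (u / v) + u / v + 1 =
   (u ^+ (2 ^ j) * u + u * v ^+ (2 ^ j) + v ^+ (2 ^ j) * v) / (v ^+ (2 ^ j) * v).
  rewrite expr_div_n; field; by rewrite vq0 vn0.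
by rewrite H mul0r eqxx.
Qed.

Lemma ker1 (F : finFieldType) m k (c x y : F) : #|F| = (2^m)%N -> (0<m)%N -> (0<k)%N -> coprime (3*k) m ->
 c * x ^+ (2^k) + (c ^+ (2^k) + 1) * x + y + (c + 1) * y ^+ (2^k) = 0 ->
 (c + 1) * x ^+ (2^(2*k)) + c ^+ (2^(2*k)) * x + (c ^+ (2^(2*k)) + 1) * y + y ^+ (2^(2*k)) = 0 ->
 (x = 0 /\ y = 0) \/ (x = c /\ y = 1).
Proof.
move=> hc hm hk hco E1 E2. have h := card_char2 hc hm.
have [e hx] : exists e, x = e + c * y.
  by exists (x + c * y); apply: (char2E (r := - (c * y))) h _; ring.
rewrite hx in E1 E2 *.
rewrite mul2n -addnn in E2.
have E1q := congr1 (fun t => t ^+ (2^k)) E1.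
rewrite /= expr0n expn_eq0 /= in E1q.
rewrite !frD // !exprMn in E1 E2 E1q.
rewrite !frD // !exprMn !frfr !expr1n in E1q.
set cq := c ^+ (2^k) in E1 E1q *. set cQ := c ^+ (2^(k+k)) in E1q E2 *.
set yq := y ^+ (2^k) in E1 E1q *. set yQ := y ^+ (2^(k+k)) in E1q E2 *.
set eq := e ^+ (2^k) in E1 E1q *. set eQ := e ^+ (2^(k+k)) in E1q E2 *.
have comb : (c*cq+c+1)^+2*eQ + (c*cQ+cQ+1)^+2*eq + (cq*cQ+cq+1)^+2*e = 0.
  rewrite -[RHS](_ : (c*cQ+cQ+1)*((c*cq+c+1)*(cq * (eQ + cQ * yQ) + (cQ + 1) * (eq + cq * yq) + yq + (cq + 1) * yQ) + (cq*cQ+cq+1)*(c * (eq + cq * yq) + (cq + 1) * (e + c * y) + y + (c + 1) * yq)) + (c*cq+c+1)*(cq*cQ+cq+1)*((c + 1) * (eQ + cQ * yQ) + cQ * (e + c * y) + (cQ + 1) * y + yQ) = 0); last first.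
    by rewrite E1 E1q E2; ring.
  by apply: (char2E (r := (- 2%:R * c * cQ * cq * e - 2%:R * c * cQ * cq * eQ - 2%:R * c * cQ * cq * eq - 4%:R * c * cQ * cq * y - 4%:R * c * cQ * cq * yQ - 4%:R * c * cQ * cq * yq - c * cQ * cq ^+ 2 * e - c * cQ * cq ^+ 2 * eQ - 2%:R * c * cQ * cq ^+ 2 * y - 2%:R * c * cQ * cq ^+ 2 * yQ - 2%:R * c * cQ * cq ^+ 2 * yq - c * cQ * e - c * cQ * eq - 2%:R * c * cQ * y - 2%:R * c * cQ * yQ - 2%:R * c * cQ * yq - c * cQ ^+ 2 * cq * e - c * cQ ^+ 2 * cq * eq - 2%:R * c * cQ ^+ 2 * cq * y - 2%:R * c * cQ ^+ 2 * cq * yQ - 2%:R * c * cQ ^+ 2 * cq * yq - c * cQ ^+ 2 * cq ^+ 2 * e - c * cQ ^+ 2 * cq ^+ 2 * y - c * cQ ^+ 2 * cq ^+ 2 * yQ - c * cQ ^+ 2 * cq ^+ 2 * yq - c * cq * eQ - c * cq * eq - 2%:R * c * cq * y - 2%:R * c * cq * yQ - 2%:R * c * cq * yq - c * cq ^+ 2 * eQ - c * cq ^+ 2 * y - c * cq ^+ 2 * yQ - c * cq ^+ 2 * yq - c * eq - c * y - c * yQ - c * yq - c ^+ 2 * cQ * cq * eQ - c ^+ 2 * cQ * cq * eq - 2%:R * c ^+ 2 * cQ * cq * y - 2%:R * c ^+ 2 * cQ * cq * yQ - 2%:R * c ^+ 2 * cQ * cq * yq - c ^+ 2 * cQ * cq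 ^+ 2 * eQ - c ^+ 2 * cQ * cq ^+ 2 * y - c ^+ 2 * cQ * cq ^+ 2 * yQ - c ^+ 2 * cQ * cq ^+ 2 * yq - c ^+ 2 * cQ * eq - c ^+ 2 * cQ * y - c ^+ 2 * cQ * yQ - c ^+ 2 * cQ * yq - c ^+ 2 * cQ ^+ 2 * cq * eq - c ^+ 2 * cQ ^+ 2 * cq * y - c ^+ 2 * cQ ^+ 2 * cq * yQ - c ^+ 2 * cQ ^+ 2 * cq * yq - c ^+ 2 * cQ ^+ 2 * cq ^+ 2 * y - c ^+ 2 * cQ ^+ 2 * cq ^+ 2 * yQ - c ^+ 2 * cQ ^+ 2 * cq ^+ 2 * yq - cQ * cq * e - cQ * cq * eQ - 2%:R * cQ * cq * y - 2%:R * cQ * cq * yQ - 2%:R * cQ * cq * yq - cQ * e - cQ * y - cQ * yQ - cQ * yq - cQ ^+ 2 * cq * e - cQ ^+ 2 * cq * y - cQ ^+ 2 * cq * yQ - cQ ^+ 2 * cq * yq - cq * eQ - cq * y - cq * yQ - cq * yq - y - yQ - yq))) h _; ring.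
have [U0 V0] : (c^+2*eq + e) = 0 /\ (eq + (cq^+2+1)*e) = 0.
  apply: (aniso_uv hc hm hk hco).
  push h; rewrite -/cq -/eq -/eQ -/cQ.
  rewrite -[RHS](_ : eq * ((c*cq+c+1)^+2*eQ + (c*cQ+cQ+1)^+2*eq + (cq*cQ+cq+1)^+2*e) = 0); last by rewrite comb mulr0.
  by apply: (char2E (r := (- c * cQ * eq ^+ 2 - c * cQ ^+ 2 * eq ^+ 2 - c * cq * eQ * eq - c * eQ * eq - c ^+ 2 * cq * eQ * eq + c ^+ 2 * eq ^+ 2 - cQ * cq * e * eq - cQ * cq ^+ 2 * e * eq - cQ * eq ^+ 2 + cQ ^+ 2 * e * eq - cq * e * eq + cq ^+ 2 * e * eQ + e * eQ + e * eq))) h _; ring.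
have N1n : c * cq + c + 1 != 0.
  have := aniso_d c hc hm hk hco; by rewrite mulrC.
have e0 : e = 0.
  have : (c * cq + c + 1)^+2 * e = 0.
    rewrite -[RHS](_ : c^+2 * (eq + (cq^+2+1)*e) + (c^+2*eq + e) = 0); last by rewrite U0 V0; ring.
    by apply: (char2E (r := (c * cq * e + c * e + c ^+ 2 * cq * e - c ^+ 2 * eq))) h _; ring.
  by move/eqP; rewrite mulf_eq0 expf_eq0 (negbTE N1n) andbF /= => /eqP.
have eq0 : eq = 0 by rewrite /eq e0 expr0n expn_eq0.
move: E1; rewrite e0 eq0 => E1.
have yy : yq = y.
  have : (c * cq + c + 1) * (yq + y) = 0 by rewrite -[RHS]E1; ring.
  move/eqP; rewrite mulf_eq0 (negbTE N1n) /= => /eqP H; exact: (c2eq h H).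
have y2 : y ^+ 2 = y by apply: (fixF hc hk _ yy); rewrite coprimeMl in hco; case/andP: hco.
case: (zero_one y2) => ->; [left | right]; split => //; rewrite add0r ?mulr0 ?mulr1 //.
Qed.

Lemma D_neq0 (F : finFieldType) m (d : F) : #|F| = (2^m)%N -> (0<m)%N -> odd m -> d ^+ 2 + d + 1 != 0.
Proof.
move=> hc hm ho; apply/negP => /eqP H; have h := card_char2 hc hm.
have d2 : d ^+ 2 = d + 1 by apply: c2eq => //; rewrite addrA.
have d4 : d ^+ (2 ^ 2) = d.
  rewrite (_ : (2 ^ 2 = 2 * 2)%N) // exprM d2.
  by rewrite sqrrD d2; apply: (char2E (r := d + 1)) h _; ring.
have := fixF hc (isT : (0 < 2)%N) _ d4; rewrite coprime2n ho => /(_ isT) dd.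
move: H; rewrite dd => H.
have : (1 : F) = 0 by rewrite -H; apply: (char2E (r := - d)) h _; ring.
by move/eqP; rewrite oner_eq0.
Qed.

Lemma ker2 (F : finFieldType) m k (c x y : F) : #|F| = (2^m)%N -> (0<m)%N -> (0<k)%N -> coprime (3*k) m -> odd m ->
 c * x ^+ (2^k) + (c ^+ (2^k) + 1) * x + y + (c + 1) * y ^+ (2^k) = 0 ->
 x + c ^+ (2^(3*k)) * y + x ^+ (2^(3*k)) + c * y ^+ (2^(3*k)) = 0 ->
 (x = 0 /\ y = 0) \/ (x = c /\ y = 1).
Proof.
move=> hc hm hk hco ho E1 E2. have h := card_char2 hc hm.
have Dn := D_neq0 c hc hm ho.
have [s [n [hx hy]]] : exists s n, x = n * c + s * (c + 1) /\ y = n + s * c.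
  exists ((x + c * y) / (c ^+ 2 + c + 1)), (y + (x + c * y) / (c ^+ 2 + c + 1) * c).
  split; last by apply: (char2E (r := - ((x + c * y) / (c ^+ 2 + c + 1) * c))) h _; ring.
  set t := (x + c * y) / _.
  have ht : t * (c ^+ 2 + c + 1) = x + c * y by rewrite /t mulfVK.
  have hx' : x = t * (c ^+ 2 + c + 1) - c * y by rewrite ht addrK.
  apply: (char2E (r := - (c * y))) h _; rewrite {1}hx'; ring.
rewrite hx hy in E1 E2 *.
rewrite (_ : (3 * k = k + k + k)%N) in E2; last by lia.
have E1q := congr1 (fun t => t ^+ (2^k)) E1.
have E1Q := congr1 (fun t => t ^+ (2^(k + k))) E1.
rewrite /= expr0n expn_eq0 /= in E1q.
rewrite /= expr0n expn_eq0 /= in E1Q.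
pushH h E1; pushH h E2; pushH h E1q; pushH h E1Q.
rewrite ?addnA in E1Q.
set c1 := c ^+ (2^k) in E1 E2 E1q E1Q *. set c2 := c ^+ (2^(k+k)) in E1 E2 E1q E1Q *. set c3 := c ^+ (2 ^ (k + k + k)) in E1 E2 E1q E1Q *.
set s1 := s ^+ (2^k) in E1 E2 E1q E1Q *. set s2 := s ^+ (2^(k+k)) in E1 E2 E1q E1Q *. set s3 := s ^+ (2 ^ (k + k + k)) in E1 E2 E1q E1Q *.
set n1 := n ^+ (2^k) in E1 E2 E1q E1Q *. set n2 := n ^+ (2^(k+k)) in E1 E2 E1q E1Q *. set n3 := n ^+ (2 ^ (k + k + k)) in E1 E2 E1q E1Q *.
have sig : ((c*c1+c+1)*(c1*c2+c1+1)*(c*c2+c2+1)*(c3*c3+c3+1)*(s3+s2) + (c*c1+c+1)*(c2*c3+c2+1)*(c*c1*c2*c3 + c*c1*c3 + c*c1*c2 + c2*c3 + c1*c3 + c*c2 + c*c3 + c1*c2 + c + c1 + 1)*(s2+s1) + (c1*c2+c1+1)*(c2*c3+c2+1)*(c1*c3+c3+1)*(c*c+c+1)*(s1+s)) = 0.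
  rewrite -[RHS](_ : (c*c1+c+1)*(c1*c2+c1+1)*(c2*c3+c2+1)*(n * c + s * (c + 1) + c3 * (n + s * c) + (n3 * c3 + s3 * (c3 + 1)) + c * (n3 + s3 * c3)) + (c3+c)*((c1*c2+c1+1)*(c2*c3+c2+1)*(c * (n1 * c1 + s1 * (c1 + 1)) + (c1 + 1) * (n * c + s * (c + 1)) + (n + s * c) + (c + 1) * (n1 + s1 * c1)) + (c*c1+c+1)*(c2*c3+c2+1)*(c1 * (n2 * c2 + s2 * (c2 + 1)) + (c2 + 1) * (n1 * c1 + s1 * (c1 + 1)) + (n1 + s1 * c1) + (c1 + 1) * (n2 + s2 * c2)) + (c*c1+c+1)*(c1*c2+c1+1)*(c2 * (n3 * c3 + s3 * (c3 + 1)) + (c3 + 1) * (n2 * c2 + s2 * (c2 + 1)) + (n2 + s2 * c2) + (c2 + 1) * (n3 + s3 * c3))) = 0); last by rewrite E1 E2 E1q E1Q; ring.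
  by apply: (char2E (r := (- 4%:R * c * c1 * c2 * c3 * n - 4%:R * c * c1 * c2 * c3 * n1 - 4%:R * c * c1 * c2 * c3 * n2 - 4%:R * c * c1 * c2 * c3 * n3 - 4%:R * c * c1 * c2 * c3 * s - c * c1 * c2 * c3 * s1 - c * c1 * c2 * c3 * s2 - 4%:R * c * c1 * c2 * c3 * s3 - 2%:R * c * c1 * c2 * c3 ^+ 2 * n - 2%:R * c * c1 * c2 * c3 ^+ 2 * n1 - 2%:R * c * c1 * c2 * c3 ^+ 2 * n2 - 2%:R * c * c1 * c2 * c3 ^+ 2 * n3 - c * c1 * c2 * c3 ^+ 2 * s - c * c1 * c2 * c3 ^+ 2 * s1 + c * c1 * c2 * c3 ^+ 2 * s2 - 2%:R * c * c1 * c2 * c3 ^+ 2 * s3 - 2%:R * c * c1 * c2 * n - 2%:R * c * c1 * c2 * n1 - 2%:R * c * c1 * c2 * n2 - 2%:R * c * c1 * c2 * n3 - 3%:R * c * c1 * c2 * s + c * c1 * c2 * s1 + c * c1 * c2 * s2 - 2%:R * c * c1 * c2 ^+ 2 * c3 * n - 2%:R * c * c1 * c2 ^+ 2 * c3 * n1 - 2%:R * c * c1 * c2 ^+ 2 * c3 * n2 - 2%:R * c * c1 * c2 ^+ 2 * c3 * n3 - 2%:R * c * c1 * c2 ^+ 2 * c3 * s + c * c1 * c2 ^+ 2 * c3 * s1 - c * c1 * c2 ^+ 2 * c3 * s2 - 2%:R * c * c1 * c2 ^+ 2 * c3 * s3 - c * c1 * c2 ^+ 2 * c3 ^+ 2 *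 n - c * c1 * c2 ^+ 2 * c3 ^+ 2 * n1 - c * c1 * c2 ^+ 2 * c3 ^+ 2 * n2 - c * c1 * c2 ^+ 2 * c3 ^+ 2 * n3 - c * c1 * c2 ^+ 2 * c3 ^+ 2 * s - c * c1 * c2 ^+ 2 * c3 ^+ 2 * s3 - c * c1 * c2 ^+ 2 * n - c * c1 * c2 ^+ 2 * n1 - c * c1 * c2 ^+ 2 * n2 - c * c1 * c2 ^+ 2 * n3 - c * c1 * c2 ^+ 2 * s + c * c1 * c2 ^+ 2 * s1 - 2%:R * c * c1 * c3 * n - 2%:R * c * c1 * c3 * n1 - 2%:R * c * c1 * c3 * n2 - 2%:R * c * c1 * c3 * n3 - c * c1 * c3 * s - c * c1 * c3 * s1 - c * c1 * c3 * s3 - c * c1 * n - c * c1 * n1 - c * c1 * n2 - c * c1 * n3 - 2%:R * c * c1 * s + c * c1 * s2 - 2%:R * c * c1 ^+ 2 * c2 * c3 * n - 2%:R * c * c1 ^+ 2 * c2 * c3 * n1 - 2%:R * c * c1 ^+ 2 * c2 * c3 * n2 - 2%:R * c * c1 ^+ 2 * c2 * c3 * n3 - c * c1 ^+ 2 * c2 * c3 * s - 2%:R * c * c1 ^+ 2 * c2 * c3 * s1 - c * c1 ^+ 2 * c2 * c3 * s2 - c * c1 ^+ 2 * c2 * c3 * s3 - c * c1 ^+ 2 * c2 * c3 ^+ 2 * n - c * c1 ^+ 2 * c2 * c3 ^+ 2 * n1 - c * c1 ^+ 2 * c2 * c3 ^+ 2 * n2 - c * c1 ^+ 2 * c2 *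 c3 ^+ 2 * n3 - c * c1 ^+ 2 * c2 * c3 ^+ 2 * s1 - c * c1 ^+ 2 * c2 * c3 ^+ 2 * s3 - 2%:R * c * c1 ^+ 2 * c2 * s + 2%:R * c * c1 ^+ 2 * c2 * s2 - c * c1 ^+ 2 * c2 ^+ 2 * c3 * n - c * c1 ^+ 2 * c2 ^+ 2 * c3 * n1 - c * c1 ^+ 2 * c2 ^+ 2 * c3 * n2 - c * c1 ^+ 2 * c2 ^+ 2 * c3 * n3 - c * c1 ^+ 2 * c2 ^+ 2 * c3 * s - c * c1 ^+ 2 * c2 ^+ 2 * c3 * s1 - c * c1 ^+ 2 * c2 ^+ 2 * c3 * s2 - c * c1 ^+ 2 * c2 ^+ 2 * c3 * s3 - c * c1 ^+ 2 * c2 ^+ 2 * c3 ^+ 2 * n - c * c1 ^+ 2 * c2 ^+ 2 * c3 ^+ 2 * n1 - c * c1 ^+ 2 * c2 ^+ 2 * c3 ^+ 2 * n2 - c * c1 ^+ 2 * c2 ^+ 2 * c3 ^+ 2 * n3 - c * c1 ^+ 2 * c2 ^+ 2 * c3 ^+ 2 * s1 - c * c1 ^+ 2 * c2 ^+ 2 * c3 ^+ 2 * s2 - c * c1 ^+ 2 * c2 ^+ 2 * c3 ^+ 2 * s3 - c * c1 ^+ 2 * c2 ^+ 2 * s + c * c1 ^+ 2 * c2 ^+ 2 * s2 - c * c1 ^+ 2 * c3 * n - c * c1 ^+ 2 * c3 * n1 - c * c1 ^+ 2 * c3 * n2 - c * c1 ^+ 2 * c3 * n3 - c * c1 ^+ 2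 * c3 * s1 - c * c1 ^+ 2 * s + c * c1 ^+ 2 * s2 - 2%:R * c * c2 * c3 * n - 2%:R * c * c2 * c3 * n1 - 2%:R * c * c2 * c3 * n2 - 2%:R * c * c2 * c3 * n3 - 2%:R * c * c2 * c3 * s + c * c2 * c3 * s1 + c * c2 * c3 * s2 - 2%:R * c * c2 * c3 * s3 - c * c2 * c3 ^+ 2 * n - c * c2 * c3 ^+ 2 * n1 - c * c2 * c3 ^+ 2 * n2 - c * c2 * c3 ^+ 2 * n3 - c * c2 * c3 ^+ 2 * s + c * c2 * c3 ^+ 2 * s2 - c * c2 * c3 ^+ 2 * s3 - c * c2 * n - c * c2 * n1 - c * c2 * n2 - c * c2 * n3 - c * c2 * s + c * c2 * s1 + c * c2 * s2 - c * c3 * n - c * c3 * n1 - c * c3 * n2 - c * c3 * n3 - c * c3 * s - c * c3 * s3 - c * n - c * n1 - c * n2 - c * n3 - c * s + c * s1 + c * s2 - 2%:R * c ^+ 2 * c1 * c2 * c3 * n - 2%:R * c ^+ 2 * c1 * c2 * c3 * n1 - 2%:R * c ^+ 2 * c1 * c2 * c3 * n2 - 2%:R * c ^+ 2 * c1 * c2 * c3 * n3 - 2%:R * c ^+ 2 * c1 * c2 * c3 * s + c ^+ 2 * c1 * c2 * c3 * s1 + c ^+ 2 * c1 * c2 * c3 * s2 - 3%:R * c ^+ 2 * c1 * c2 * c3 * s3 + 2%:R * c ^+ 2 * c1 * c2 * c3 ^+ 2 * s1 + 2%:R * c ^+ 2 * c1 * c2 * c3 ^+ 2 * s2 - 3%:R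 * c ^+ 2 * c1 * c2 * n - 3%:R * c ^+ 2 * c1 * c2 * n1 - 3%:R * c ^+ 2 * c1 * c2 * n2 - 3%:R * c ^+ 2 * c1 * c2 * n3 - 3%:R * c ^+ 2 * c1 * c2 * s - 2%:R * c ^+ 2 * c1 * c2 * s1 - 2%:R * c ^+ 2 * c1 * c2 * s2 - c ^+ 2 * c1 * c2 ^+ 2 * c3 * n - c ^+ 2 * c1 * c2 ^+ 2 * c3 * n1 - c ^+ 2 * c1 * c2 ^+ 2 * c3 * n2 - c ^+ 2 * c1 * c2 ^+ 2 * c3 * n3 - c ^+ 2 * c1 * c2 ^+ 2 * c3 * s + c ^+ 2 * c1 * c2 ^+ 2 * c3 * s1 - c ^+ 2 * c1 * c2 ^+ 2 * c3 * s3 + c ^+ 2 * c1 * c2 ^+ 2 * c3 ^+ 2 * s1 + c ^+ 2 * c1 * c2 ^+ 2 * c3 ^+ 2 * s2 - c ^+ 2 * c1 * c2 ^+ 2 * n - c ^+ 2 * c1 * c2 ^+ 2 * n1 - c ^+ 2 * c1 * c2 ^+ 2 * n2 - c ^+ 2 * c1 * c2 ^+ 2 * n3 - c ^+ 2 * c1 * c2 ^+ 2 * s - c ^+ 2 * c1 * c2 ^+ 2 * s2 + 2%:R * c ^+ 2 * c1 * c3 * s1 - 2%:R * c ^+ 2 * c1 * c3 * s3 - 2%:R * c ^+ 2 * c1 * n - 2%:R * c ^+ 2 * c1 * n1 - 2%:R * c ^+ 2 * c1 * n2 - 2%:R * c ^+ 2 * c1 * n3 - 2%:R * c ^+ 2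 * c1 * s - 2%:R * c ^+ 2 * c1 * s1 - c ^+ 2 * c1 * s2 - c ^+ 2 * c1 ^+ 2 * c2 * c3 * n - c ^+ 2 * c1 ^+ 2 * c2 * c3 * n1 - c ^+ 2 * c1 ^+ 2 * c2 * c3 * n2 - c ^+ 2 * c1 ^+ 2 * c2 * c3 * n3 - c ^+ 2 * c1 ^+ 2 * c2 * c3 * s - 2%:R * c ^+ 2 * c1 ^+ 2 * c2 * c3 * s3 + c ^+ 2 * c1 ^+ 2 * c2 * c3 ^+ 2 * s1 + c ^+ 2 * c1 ^+ 2 * c2 * c3 ^+ 2 * s2 - 2%:R * c ^+ 2 * c1 ^+ 2 * c2 * n - 2%:R * c ^+ 2 * c1 ^+ 2 * c2 * n1 - 2%:R * c ^+ 2 * c1 ^+ 2 * c2 * n2 - 2%:R * c ^+ 2 * c1 ^+ 2 * c2 * n3 - 2%:R * c ^+ 2 * c1 ^+ 2 * c2 * s - 3%:R * c ^+ 2 * c1 ^+ 2 * c2 * s1 - 2%:R * c ^+ 2 * c1 ^+ 2 * c2 * s2 - c ^+ 2 * c1 ^+ 2 * c2 ^+ 2 * c3 * n - c ^+ 2 * c1 ^+ 2 * c2 ^+ 2 * c3 * n1 - c ^+ 2 * c1 ^+ 2 * c2 ^+ 2 * c3 * n2 - c ^+ 2 * c1 ^+ 2 * c2 ^+ 2 * c3 * n3 - c ^+ 2 * c1 ^+ 2 * c2 ^+ 2 * c3 * s - c ^+ 2 * c1 ^+ 2 * c2 ^+ 2 * c3 * s3 + c ^+ 2 * c1 ^+ 2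 * c2 ^+ 2 * c3 ^+ 2 * s1 + c ^+ 2 * c1 ^+ 2 * c2 ^+ 2 * c3 ^+ 2 * s2 - c ^+ 2 * c1 ^+ 2 * c2 ^+ 2 * n - c ^+ 2 * c1 ^+ 2 * c2 ^+ 2 * n1 - c ^+ 2 * c1 ^+ 2 * c2 ^+ 2 * n2 - c ^+ 2 * c1 ^+ 2 * c2 ^+ 2 * n3 - c ^+ 2 * c1 ^+ 2 * c2 ^+ 2 * s - c ^+ 2 * c1 ^+ 2 * c2 ^+ 2 * s1 - c ^+ 2 * c1 ^+ 2 * c2 ^+ 2 * s2 + c ^+ 2 * c1 ^+ 2 * c3 * s1 - c ^+ 2 * c1 ^+ 2 * c3 * s3 - c ^+ 2 * c1 ^+ 2 * n - c ^+ 2 * c1 ^+ 2 * n1 - c ^+ 2 * c1 ^+ 2 * n2 - c ^+ 2 * c1 ^+ 2 * n3 - c ^+ 2 * c1 ^+ 2 * s - 2%:R * c ^+ 2 * c1 ^+ 2 * s1 - c ^+ 2 * c1 ^+ 2 * s2 - c ^+ 2 * c2 * c3 * n - c ^+ 2 * c2 * c3 * n1 - c ^+ 2 * c2 * c3 * n2 - c ^+ 2 * c2 * c3 * n3 - c ^+ 2 * c2 * c3 * s + c ^+ 2 * c2 * c3 * s1 + c ^+ 2 * c2 * c3 * s2 - c ^+ 2 * c2 * c3 * s3 + c ^+ 2 * c2 * c3 ^+ 2 * s1 + c ^+ 2 * c2 * c3 ^+ 2 * s2 - c ^+ 2 * c2 * n - c ^+ 2 * c2 * n1 - c ^+ 2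 * c2 * n2 - c ^+ 2 * c2 * n3 - c ^+ 2 * c2 * s + c ^+ 2 * c3 * s1 - c ^+ 2 * c3 * s3 - c ^+ 2 * n - c ^+ 2 * n1 - c ^+ 2 * n2 - c ^+ 2 * n3 - c ^+ 2 * s - 2%:R * c1 * c2 * c3 * n - 2%:R * c1 * c2 * c3 * n1 - 2%:R * c1 * c2 * c3 * n2 - 2%:R * c1 * c2 * c3 * n3 + c1 * c2 * c3 * s1 - c1 * c2 * c3 * s2 - c1 * c2 * c3 * s3 - c1 * c2 * c3 ^+ 2 * n - c1 * c2 * c3 ^+ 2 * n1 - c1 * c2 * c3 ^+ 2 * n2 - c1 * c2 * c3 ^+ 2 * n3 - c1 * c2 * c3 ^+ 2 * s3 + 2%:R * c1 * c2 * s1 + 2%:R * c1 * c2 * s2 - c1 * c2 ^+ 2 * c3 * n - c1 * c2 ^+ 2 * c3 * n1 - c1 * c2 ^+ 2 * c3 * n2 - c1 * c2 ^+ 2 * c3 * n3 + c1 * c2 ^+ 2 * c3 * s1 - c1 * c2 ^+ 2 * c3 * s2 - c1 * c2 ^+ 2 * c3 * s3 - c1 * c2 ^+ 2 * c3 ^+ 2 * n - c1 * c2 ^+ 2 * c3 ^+ 2 * n1 - c1 * c2 ^+ 2 * c3 ^+ 2 * n2 - c1 * c2 ^+ 2 * c3 ^+ 2 * n3 - c1 * c2 ^+ 2 * c3 ^+ 2 * s2 - c1 * c2 ^+ 2 * c3 ^+ 2 * s3 + c1 * c2 ^+ 2 * s1 + c1 * c2 ^+ 2 * s2 - c1 * c3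 * n - c1 * c3 * n1 - c1 * c3 * n2 - c1 * c3 * n3 + c1 * s1 + c1 * s2 - c2 * c3 * n - c2 * c3 * n1 - c2 * c3 * n2 - c2 * c3 * n3 + c2 * c3 * s1 - c2 * c3 * s3 - c2 * c3 ^+ 2 * n - c2 * c3 ^+ 2 * n1 - c2 * c3 ^+ 2 * n2 - c2 * c3 ^+ 2 * n3 - c2 * c3 ^+ 2 * s3 + c2 * s1 + c2 * s2 - c3 * n - c3 * n1 - c3 * n2 - c3 * n3 + s1 + s2))) h _; ring.
have N10 : (c*c1+c+1) != 0 by have := aniso_d c hc hm hk hco; rewrite mulrC.
have N11 : (c1*c2+c1+1) != 0 by have := aniso_d c1 hc hm hk hco; rewrite frfr mulrC.
have N12 : (c2*c3+c2+1) != 0 by have := aniso_d c2 hc hm hk hco; rewrite frfr mulrC.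
have hco2 : coprime (3 * (k + k)) m.
  rewrite (_ : (3 * (k + k) = 2 * (3 * k))%N); last by lia.
  by rewrite coprimeMl coprime2n ho hco.
have N20 : (c*c2+c2+1) != 0.
  have [c0e|c0] := eqVneq c 0; first by rewrite /c2 c0e !expr0n !expn_eq0 /= mul0r !add0r oner_eq0.
  have := aniso_d (c^-1) hc hm (_ : (0 < k + k)%N) hco2.
  move=> /(_ ltac:(lia)); apply: contra => /eqP H0; apply/eqP.
  rewrite exprVn -/c2.
  have c2n : c2 != 0 by rewrite expf_neq0.
  rewrite -[LHS](mulfK (mulf_neq0 c2n c0)) -[RHS](mul0r (c2 * c)^-1); congr (_ * _).
  rewrite -H0; field; by rewrite c2n c0.
have N21 : (c1*c3+c3+1) != 0.
  have [c0e|c0] := eqVneq c1 0; first by rewrite /c3 -addnA -frfr -/c1 c0e !expr0n !expn_eq0 /= mul0r !add0r oner_eq0.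
  have := aniso_d (c1^-1) hc hm (_ : (0 < k + k)%N) hco2.
  move=> /(_ ltac:(lia)); apply: contra => /eqP H0; apply/eqP.
  rewrite exprVn frfr addnA -/c3.
  have c3n : c3 != 0 by rewrite /c3 -addnA -frfr -/c1 expf_neq0.
  rewrite -[LHS](mulfK (mulf_neq0 c3n c0)) -[RHS](mul0r (c3 * c1)^-1); congr (_ * _).
  rewrite -H0; field; by rewrite c3n c0.
have D0 : (c*c+c+1) != 0 := D_neq0 c hc hm ho.
have D1 : (c1*c1+c1+1) != 0 := D_neq0 c1 hc hm ho.
have D2 : (c2*c2+c2+1) != 0 := D_neq0 c2 hc hm ho.
have D3 : (c3*c3+c3+1) != 0 := D_neq0 c3 hc hm ho.
have [e0 [e1 [e2 [e0N [e1N [e2N [e01 e12]]]]]]] : exists e0 e1 e2,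
   e0 * (c*c1+c+1) = (c*c+c+1)*(c1*c1+c1+1)*(s1+s) /\ e1 * (c1*c2+c1+1) = (c1*c1+c1+1)*(c2*c2+c2+1)*(s2+s1) /\ e2 * (c2*c3+c2+1) = (c2*c2+c2+1)*(c3*c3+c3+1)*(s3+s2) /\
   e0 ^+ (2^k) = e1 /\ e1 ^+ (2^k) = e2.
  exists ((c*c+c+1)*(c1*c1+c1+1)*(s1+s) / (c*c1+c+1)), ((c1*c1+c1+1)*(c2*c2+c2+1)*(s2+s1) / (c1*c2+c1+1)), ((c2*c2+c2+1)*(c3*c3+c3+1)*(s3+s2) / (c2*c3+c2+1)).
  split; first by rewrite divfK.
  split; first by rewrite divfK.
  split; first by rewrite divfK.
  split; push h; rewrite ?addnA -?/c1 -?/c2 -?/c3 -?/s1 -?/s2 -?/s3 //.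
have key : (c*c2+c2+1)*(c1*c1+c1+1)*e2 + (c*c1*c2*c3 + c*c1*c3 + c*c1*c2 + c2*c3 + c1*c3 + c*c2 + c*c3 + c1*c2 + c + c1 + 1)*e1 + (c1*c3+c3+1)*(c2*c2+c2+1)*e0 = 0.
  have : ((c*c2+c2+1)*(c1*c1+c1+1)*e2 + (c*c1*c2*c3 + c*c1*c3 + c*c1*c2 + c2*c3 + c1*c3 + c*c2 + c*c3 + c1*c2 + c + c1 + 1)*e1 + (c1*c3+c3+1)*(c2*c2+c2+1)*e0) * ((c*c1+c+1)*(c1*c2+c1+1)*(c2*c3+c2+1)) = (c1*c1+c1+1)*(c2*c2+c2+1)*((c*c1+c+1)*(c1*c2+c1+1)*(c*c2+c2+1)*(c3*c3+c3+1)*(s3+s2) + (c*c1+c+1)*(c2*c3+c2+1)*(c*c1*c2*c3 + c*c1*c3 + c*c1*c2 + c2*c3 + c1*c3 + c*c2 + c*c3 + c1*c2 + c + c1 + 1)*(s2+s1) + (c1*c2+c1+1)*(c2*c3+c2+1)*(c1*c3+c3+1)*(c*c+c+1)*(s1+s)).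
    have -> : ((c*c2+c2+1)*(c1*c1+c1+1)*e2 + (c*c1*c2*c3 + c*c1*c3 + c*c1*c2 + c2*c3 + c1*c3 + c*c2 + c*c3 + c1*c2 + c + c1 + 1)*e1 + (c1*c3+c3+1)*(c2*c2+c2+1)*e0) * ((c*c1+c+1)*(c1*c2+c1+1)*(c2*c3+c2+1)) = (c*c2+c2+1)*(c1*c1+c1+1)*(c*c1+c+1)*(c1*c2+c1+1)*(e2*(c2*c3+c2+1)) + (c*c1*c2*c3 + c*c1*c3 + c*c1*c2 + c2*c3 + c1*c3 + c*c2 + c*c3 + c1*c2 + c + c1 + 1)*(c*c1+c+1)*(c2*c3+c2+1)*(e1*(c1*c2+c1+1)) + (c1*c3+c3+1)*(c2*c2+c2+1)*(c1*c2+c1+1)*(c2*c3+c2+1)*(e0*(c*c1+c+1)) by ring.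
    by rewrite e0N e1N e2N; ring.
  rewrite sig mulr0 => /eqP; rewrite mulf_eq0 !mulf_eq0 (negbTE N10) (negbTE N11) (negbTE N12) /= orbF.
  by move/eqP.
have [u0 v0] : ((1+c+c1)*e1 + (1+c1*c2)*e0) = 0 /\ ((1+c*c1)*e1 + ((1+c1+c2)+(1+c1*c2))*e0) = 0.
  apply: (aniso_uv hc hm hk hco).
  push h; rewrite ?addnA -?/c1 -?/c2 -?/c3 e01 e12.
  rewrite -[RHS](_ : e1*((c*c2+c2+1)*(c1*c1+c1+1)*e2 + (c*c1*c2*c3 + c*c1*c3 + c*c1*c2 + c2*c3 + c1*c3 + c*c2 + c*c3 + c1*c2 + c + c1 + 1)*e1 + (c1*c3+c3+1)*(c2*c2+c2+1)*e0) = 0); last by rewrite key mulr0.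
  by apply: (char2E (r := (c * c1 * e1 * e2 + c * c1 * e1 ^+ 2 + c * c2 * c3 * e1 ^+ 2 + c * e1 * e2 + c * e1 ^+ 2 + c1 * c2 * c3 * e0 * e1 + c1 * c2 * c3 * e1 ^+ 2 + 3%:R * c1 * c2 * e0 * e1 + 3%:R * c1 * c2 * e0 * e2 + c1 * c2 * e1 * e2 + c1 * c2 ^+ 2 * c3 * e0 * e1 + c1 * c2 ^+ 2 * e0 * e1 + c1 * c2 ^+ 2 * e0 * e2 + c1 * e0 * e1 + c1 * e0 * e2 + c1 * e1 * e2 + c1 * e1 ^+ 2 + c1 ^+ 2 * c2 * e0 * e2 + c1 ^+ 2 * c2 ^+ 2 * e0 * e2 + 2%:R * c2 * c3 * e0 * e1 + c2 * c3 * e1 ^+ 2 + 2%:R * c2 * e0 * e1 + c2 * e0 * e2 + c2 * e1 ^+ 2 + c3 * e0 * e1 + c3 * e1 ^+ 2 + 3%:R * e0 * e1 + 2%:R * e0 * e2 + e1 * e2 + 2%:R * e1 ^+ 2))) h _; ring.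
have ee0 : e0 = 0.
  have : (c*c2+c2+1)*(c1*c1+c1+1)*e0 = 0.
    rewrite -[RHS](_ : (1+c*c1)*((1+c+c1)*e1 + (1+c1*c2)*e0) + (1+c+c1)*((1+c*c1)*e1 + ((1+c1+c2)+(1+c1*c2))*e0) = 0); last by rewrite u0 v0; ring.
    by apply: (char2E (r := (- c * c1 * e0 - c * c1 * e1 - c * c1 ^+ 2 * e1 - c * e0 - c * e1 - c ^+ 2 * c1 * e1 - c1 * c2 * e0 - c1 * e0 - c1 * e1 - e0 - e1))) h _; ring.
  by move/eqP; rewrite !mulf_eq0 (negbTE N20) (negbTE D1) /= => /eqP.
have ss : s1 = s.
  have : (c*c+c+1)*(c1*c1+c1+1)*(s1+s) = 0 by rewrite -e0N ee0 mul0r.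
  move/eqP; rewrite !mulf_eq0 (negbTE D0) (negbTE D1) /= => /eqP H0.
  exact: (c2eq h H0).
have hcok : coprime k m by move: hco; rewrite coprimeMl => /andP [].
have sq2 : s ^+ 2 = s by apply: (fixF hc hk hcok).
have nn : n1 = n + s.
  have : (c*c1+c+1)*(n1 + n + s) = 0.
    rewrite -[RHS]E1 ss; apply: (char2E (r := (- c * c1 * s - c * s - c1 * s))) h _; ring.
  move/eqP; rewrite mulf_eq0 (negbTE N10) /= => /eqP H0.
  apply: (c2eq h); by rewrite addrA.
case: (zero_one sq2) => s0.
- move: nn; rewrite s0 addr0 => nn.
  have nsq : n ^+ 2 = n by apply: (fixF hc hk hcok).
  by case: (zero_one nsq) => ->; [left | right]; rewrite !mul0r ?mul1r ?addr0; split.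
- exfalso; move: nn; rewrite s0 => nn.
  have hcokk : coprime (k + k) m.
    by rewrite (_ : (k + k = 2 * k)%N) ?coprimeMl ?coprime2n ?ho ?hcok //; lia.
  have nQ : n ^+ (2 ^ (k + k)) = n.
    rewrite -frfr -/n1 nn frD // expr1n -/n1 nn.
    by apply: (char2E (r := 1)) h _; ring.
  have kk0 : (0 < k + k)%N by lia.
  have nsq : n ^+ 2 = n by apply: (fixF hc kk0 hcokk).
  have : n1 = n by rewrite /n1 fix2.
  rewrite nn => /eqP; rewrite -subr_eq0 addrC addKr oner_eq0 //.
Qed.

Definition gg (F : fieldType) (z : F * F) : F * F := (z.2, z.1 + z.2).

Lemma general_ker (F : fieldType) (pol : F * F -> F * F -> F * F) :
  (2%:R : F) = 0 ->
  (forall t a1 a2 x y, t != 0 -> pol (a1, a2) (x, y) = 0 -> pol (t * a1, t * a2) (t * x, t * y) = 0) ->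
  (forall a w, pol (gg a) (gg w) = pol a w) ->
  (forall c x y, pol (c, 1) (x, y) = 0 -> (x = 0 /\ y = 0) \/ (x = c /\ y = 1)) ->
  forall a w, a != 0 -> pol a w = 0 -> w = 0 \/ w = a.
Proof.
move=> h Hhom Hg Hn.
have main : forall a1 a2 x y, a2 != 0 -> pol (a1, a2) (x, y) = 0 -> (x, y) = 0 \/ (x, y) = (a1, a2).
  move=> a1 a2 x y a20 H.
  have t0 : a2^-1 != 0 by rewrite invr_eq0.
  have := Hhom _ _ _ _ _ t0 H; rewrite mulVf //.
  case/Hn => [[x0 y0] | [x0 y0]]; [left | right].
    move: x0 y0 => /eqP; rewrite mulf_eq0 (negbTE t0) /= => /eqP -> /eqP.
    by rewrite mulf_eq0 (negbTE t0) /= => /eqP ->.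
  have ex : x = a1 by move: x0 => /(congr1 (fun u => a2 * u)); rewrite !mulrA divff // !mul1r.
  have ey : y = a2 by move: y0 => /(congr1 (fun u => a2 * u)); rewrite !mulrA divff // !mul1r mulr1.
  by rewrite ex ey.
move=> [a1 a2] [x y] an0 H.
have [a20|a2n] := eqVneq a2 0; last exact: main.
have a1n : a1 != 0 by move: an0; rewrite a20; apply: contra => /eqP ->.
move: H; rewrite -Hg /gg /= a20 addr0 => H.
have [H1|H1] := main _ _ _ _ a1n H.
  have y0 : y = 0 by have := congr1 fst H1.
  have xy : x + y = 0 by have := congr1 snd H1.
  by left; rewrite y0 addr0 in xy; rewrite xy y0.
have y0 : y = 0 by have := congr1 fst H1.
have xy : x + y = a1 by have := congr1 snd H1.
by right; rewrite y0 addr0 in xy; rewrite xy y0.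
Qed.

Lemma pc2 (F : fieldType) (h : (2%:R : F) = 0) (u : F * F) : u + u = 0.
Proof. by case: u => a b; change ((a + a, b + b) = (0, 0)); rewrite (c2eq' h (erefl a)) (c2eq' h (erefl b)). Qed.

Lemma pcK (F : fieldType) (h : (2%:R : F) = 0) (u v : F * F) : u + v + v = u.
Proof. by rewrite -addrA pc2 // addr0. Qed.

Lemma pc2eq (F : fieldType) (h : (2%:R : F) = 0) (u v : F * F) : u + v = 0 -> u = v.
Proof. by move=> H; rewrite -(pcK h u v) H add0r. Qed.

Lemma ggg (F : fieldType) (h : (2%:R : F) = 0) (z : F * F) : gg (gg (gg z)) = z.
Proof.
case: z => a b; rewrite /gg /=; congr (_, _) => /=.
  by apply: (char2E (r := b)) h _; ring.
by apply: (char2E (r := a + b)) h _; ring.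
Qed.

Lemma u0a (F : fieldType) (h : (2%:R : F) = 0) (a : F * F) : (a.2, a.1 + a.2) + a = gg (a.2, a.1 + a.2).
Proof.
case: a => a b; rewrite /gg /=; congr (_, _) => /=.
  by apply: (char2E (r := 0)) h _; ring.
by apply: (char2E (r := 0)) h _; ring.
Qed.

Lemma gg_neq (F : fieldType) (h : (2%:R : F) = 0) (z : F * F) : z != 0 -> gg z != z.
Proof.
case: z => a b nz; apply/negP => /eqP [e1 e2].
have a0 : a = 0 by apply: (addIr b); rewrite e2 add0r.
have b0 : b = 0 by rewrite e1 a0.
by move: nz; rewrite a0 b0 => /eqP H; exact: (H erefl).
Qed.

Lemma apn_a3 (F : finFieldType) (f : F * F -> F * F) (pol : F * F -> F * F -> F * F) :
 (2%:R : F) = 0 ->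
 (forall z a, f (z + a) + f z = pol a z + f a) ->
 (forall a w w', pol a (w + w') = pol a w + pol a w') ->
 (forall a w, a != 0 -> pol a w = 0 -> w = 0 \/ w = a) ->
 (forall z, f (gg z) = f z) ->
 f 0 = 0 ->
 APN2 f /\ almost_3_to_1 f.
Proof.
move=> h Hd Ha Hk Hg f0.
have same : forall a z z0, a != 0 -> f (z + a) + f z = f (z0 + a) + f z0 -> z = z0 \/ z = z0 + a.
  move=> a z z0 an0; rewrite !Hd => /addIr H.
  have : pol a (z + z0) = 0 by rewrite Ha H pc2.
  case/(Hk _ _ an0) => H1; [left | right].
    exact: (pc2eq h H1).
  by rewrite -H1 addrC pcK.
have u0s : forall a, f ((a.2, a.1 + a.2) + a) + f (a.2, a.1 + a.2) = 0.
  by move=> a; rewrite u0a // Hg pc2.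
split.
  move=> a b an0.
  case: (set_0Vmem [set z : F * F | f (z + a) + f z == b]) => [-> | [z0]]; first by rewrite cards0.
  rewrite inE => /eqP hz0.
  apply: (leq_trans (subset_leq_card (_ : _ \subset [set z0; z0 + a]))); last by rewrite cards2; case: (_ != _).
  apply/subsetP => z; rewrite !inE => /eqP hz.
  by case: (same a z z0 an0 (etrans hz (esym hz0))) => ->; rewrite eqxx ?orbT.
have fib : forall z w, z != 0 -> f w = f z -> w = z \/ w = gg z \/ w = gg (gg z).
  move=> z w zn0 hw.
  have [->|wz] := eqVneq w z; first by left.
  have [a ha] : exists a, a = w + z by eexists.
  have an0 : a != 0 by rewrite ha; apply: contra wz => /eqP H; apply/eqP; exact: (pc2eq h H).
  have hw' : z + a = w by rewrite ha addrC pcK.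
  have hz : f (z + a) + f z = 0 by rewrite hw' hw pc2.
  case: (same _ _ _ an0 (etrans hz (esym (u0s a)))) => ez.
    by right; left; rewrite -hw' ez u0a.
  by right; right; rewrite -hw' ez pcK // u0a // ggg.
have gg0 : forall w : F * F, gg w = 0 -> w = 0.
  case=> a b H; have e1 : b = 0 := congr1 fst H; have e2 : a + b = 0 := congr1 snd H.
  by rewrite e1 addr0 in e2; rewrite e1 e2.
have u00 : forall w : F * F, (w.2, w.1 + w.2) = 0 -> w = 0.
  by move=> w H; apply: gg0; rewrite /gg.
exists 0; split.
- by rewrite -f0 codom_f.
- have -> : [set z : F * F | f z == 0] = [set (0 : F * F)].
    apply/setP => z; rewrite !inE; apply/eqP/eqP => [hz|->//].
    have [//|zn] := eqVneq z 0.
    have hz' : f (0 + z) + f 0 = 0 by rewrite add0r hz f0 addr0.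
    case: (same _ _ _ zn (etrans hz' (esym (u0s z)))) => H.
      by apply: u00; rewrite -H.
    by apply: u00; apply: gg0; rewrite -u0a // -H.
  by rewrite cards1.
- move=> y /codomP [z ->] yn0.
  have zn0 : z != 0 by apply: contra yn0 => /eqP ->; rewrite f0.
  have ne1 : z != gg z by rewrite eq_sym gg_neq.
  have ggn0 : gg z != 0 by apply: contra zn0 => /eqP /gg0 ->.
  have ne2 : gg z != gg (gg z) by rewrite eq_sym gg_neq.
  have ne3 : z != gg (gg z).
    apply: contra ne1 => /eqP H; apply/eqP.
    by rewrite {2}H ggg.
  have -> : [set w | f w == f z] = [set z; gg z; gg (gg z)].
    apply/setP => w; rewrite !inE; apply/eqP/idP.
      by move/(fib _ _ zn0) => [->|[->|->]]; rewrite eqxx ?orbT.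
    by move=> /orP [/orP [/eqP->|/eqP->]|/eqP->] //; rewrite ?Hg.
  rewrite setUC !cardsU1 cards1 !inE.
  by rewrite (negbTE ne1) eq_sym (negbTE ne3) eq_sym (negbTE ne2).
Qed.

Definition pol1 (F : fieldType) (k : nat) (a w : F * F) : F * F :=
  (a.1 * w.1 ^+ (2^k) + (a.1 ^+ (2^k) + a.2 ^+ (2^k)) * w.1 + a.2 ^+ (2^k) * w.2 + (a.1 + a.2) * w.2 ^+ (2^k),
   (a.1 + a.2) * w.1 ^+ (2^(2*k)) + a.1 ^+ (2^(2*k)) * w.1 + (a.1 ^+ (2^(2*k)) + a.2 ^+ (2^(2*k))) * w.2 + a.2 * w.2 ^+ (2^(2*k))).
Definition pol2 (F : fieldType) (k : nat) (a w : F * F) : F * F :=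
  ((pol1 k a w).1,
   a.2 ^+ (2^(3*k)) * w.1 + a.1 ^+ (2^(3*k)) * w.2 + a.2 * w.1 ^+ (2^(3*k)) + a.1 * w.2 ^+ (2^(3*k))).

Lemma f1_diff (F : finFieldType) (h : (2%:R:F) = 0) k (z a : F*F) : f1 k (z + a) + f1 k z = pol1 k a z + f1 k a.
Proof.
case: z => x y; case: a => a b.
change ((x, y) + (a, b)) with (x + a, y + b).
rewrite /f1 /pol1 /=; rewrite !exprD !expr1.
push h.
congr (_, _) => /=.
- apply: (char2E (r := (x * (x ^+ (2 ^ k)) + x * (y ^+ (2 ^ k)) + y * (y ^+ (2 ^ k))))) h _; ring.
- apply: (char2E (r := (x * (x ^+ (2 ^ (2 * k))) + (x ^+ (2 ^ (2 * k))) * y + y * (y ^+ (2 ^ (2 * k)))))) h _; ring.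
Qed.

Lemma f2_diff (F : finFieldType) (h : (2%:R:F) = 0) k (z a : F*F) : f2 k (z + a) + f2 k z = pol2 k a z + f2 k a.
Proof.
case: z => x y; case: a => a b.
change ((x, y) + (a, b)) with (x + a, y + b).
rewrite /f2 /pol2 /pol1 /=; rewrite !exprD !expr1.
push h.
congr (_, _) => /=.
- apply: (char2E (r := (x * (x ^+ (2 ^ k)) + x * (y ^+ (2 ^ k)) + y * (y ^+ (2 ^ k))))) h _; ring.
- apply: (char2E (r := (x * (y ^+ (2 ^ (3 * k))) + (x ^+ (2 ^ (3 * k))) * y))) h _; ring.
Qed.

Lemma pol1_add (F : finFieldType) (h : (2%:R:F) = 0) k (a w w' : F*F) : pol1 k a (w + w') = pol1 k a w + pol1 k a w'.
Proof.
case: w => x y; case: w' => x' y'; case: a => a b.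
change ((x, y) + (x', y')) with (x + x', y + y').
rewrite /pol1 /=; push h.
congr (_, _) => /=.
- apply: (char2E (r := (0))) h _; ring.
- apply: (char2E (r := (0))) h _; ring.
Qed.

Lemma pol2_add (F : finFieldType) (h : (2%:R:F) = 0) k (a w w' : F*F) : pol2 k a (w + w') = pol2 k a w + pol2 k a w'.
Proof.
case: w => x y; case: w' => x' y'; case: a => a b.
change ((x, y) + (x', y')) with (x + x', y + y').
rewrite /pol2 /pol1 /=; push h.
congr (_, _) => /=.
- apply: (char2E (r := (0))) h _; ring.
- apply: (char2E (r := (0))) h _; ring.
Qed.

Lemma pol1_g (F : finFieldType) (h : (2%:R:F) = 0) k (a w : F*F) : pol1 k (gg a) (gg w) = pol1 k a w.
Proof.
case: w => x y; case: a => a b.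
rewrite /pol1 /gg /=; push h.
congr (_, _).
- apply: (char2E (r := ((a ^+ (2 ^ k)) * y + b * (x ^+ (2 ^ k)) + b * (y ^+ (2 ^ k)) + (b ^+ (2 ^ k)) * y))) h _; ring.
- apply: (char2E (r := (a * (y ^+ (2 ^ (2 * k))) + b * (y ^+ (2 ^ (2 * k))) + (b ^+ (2 ^ (2 * k))) * x + (b ^+ (2 ^ (2 * k))) * y))) h _; ring.
Qed.

Lemma pol2_g (F : finFieldType) (h : (2%:R:F) = 0) k (a w : F*F) : pol2 k (gg a) (gg w) = pol2 k a w.
Proof.
case: w => x y; case: a => a b.
rewrite /pol2 /pol1 /gg /=; push h.
congr (_, _).
- apply: (char2E (r := ((a ^+ (2 ^ k)) * y + b * (x ^+ (2 ^ k)) + b * (y ^+ (2 ^ k)) + (b ^+ (2 ^ k)) * y))) h _; ring.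
- apply: (char2E (r := (b * (y ^+ (2 ^ (3 * k))) + (b ^+ (2 ^ (3 * k))) * y))) h _; ring.
Qed.

Lemma f1_g (F : finFieldType) (h : (2%:R:F) = 0) k (z : F*F) : f1 k (gg z) = f1 k z.
Proof.
case: z => x y.
rewrite /f1 /gg /=; rewrite !exprD !expr1.
push h.
congr (_, _).
- apply: (char2E (r := ((x ^+ (2 ^ k)) * y + y * (y ^+ (2 ^ k))))) h _; ring.
- apply: (char2E (r := (x * (y ^+ (2 ^ (2 * k))) + y * (y ^+ (2 ^ (2 * k)))))) h _; ring.
Qed.

Lemma f2_g (F : finFieldType) (h : (2%:R:F) = 0) k (z : F*F) : f2 k (gg z) = f2 k z.
Proof.
case: z => x y.
rewrite /f2 /gg /=; rewrite !exprD !expr1.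
push h.
congr (_, _).
- apply: (char2E (r := ((x ^+ (2 ^ k)) * y + y * (y ^+ (2 ^ k))))) h _; ring.
- apply: (char2E (r := (y * (y ^+ (2 ^ (3 * k)))))) h _; ring.
Qed.

Lemma pol1_hom (F : finFieldType) (h : (2%:R:F) = 0) k t a1 a2 x y : t != 0 ->
  pol1 k (a1, a2) (x, y) = 0 -> pol1 k (t * a1, t * a2) (t * x, t * y) = (0 : F * F).
Proof.
move=> tn H.
have e1 : (pol1 k (a1, a2) (x, y)).1 = 0 by rewrite H.
have e2 : (pol1 k (a1, a2) (x, y)).2 = 0 by rewrite H.
rewrite (_ : pol1 k (t * a1, t * a2) (t * x, t * y) = ((t ^+ (2^k) * t) * (pol1 k (a1, a2) (x, y)).1, (t ^+ (2^(2*k)) * t) * (pol1 k (a1, a2) (x, y)).2)); last first.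
  rewrite /pol1 /=; push h.
  congr (_, _).
  - apply: (char2E (r := (0))) h _; ring.
  - apply: (char2E (r := (0))) h _; ring.
by rewrite e1 e2 !mulr0.
Qed.

Lemma pol2_hom (F : finFieldType) (h : (2%:R:F) = 0) k t a1 a2 x y : t != 0 ->
  pol2 k (a1, a2) (x, y) = 0 -> pol2 k (t * a1, t * a2) (t * x, t * y) = (0 : F * F).
Proof.
move=> tn H.
have e1 : (pol2 k (a1, a2) (x, y)).1 = 0 by rewrite H.
have e2 : (pol2 k (a1, a2) (x, y)).2 = 0 by rewrite H.
rewrite (_ : pol2 k (t * a1, t * a2) (t * x, t * y) = ((t ^+ (2^k) * t) * (pol2 k (a1, a2) (x, y)).1, (t ^+ (2^(3*k)) * t) * (pol2 k (a1, a2) (x, y)).2)); last first.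
  rewrite /pol2 /pol1 /=; push h.
  congr (_, _).
  - apply: (char2E (r := (0))) h _; ring.
  - apply: (char2E (r := (0))) h _; ring.
by rewrite e1 e2 !mulr0.
Qed.

Lemma f1_0 (F : finFieldType) k : f1 k (0 : F * F) = 0.
Proof. by rewrite /f1 /= !exprD !expr1 !mulr0 !mul0r !addr0. Qed.

Lemma f2_0 (F : finFieldType) k : f2 k (0 : F * F) = 0.
Proof. by rewrite /f2 /= !exprD !expr1 !mulr0 !mul0r ?addr0. Qed.

Lemma f1_norm (F : finFieldType) m k (c x y : F) : #|F| = (2^m)%N -> (0<m)%N -> (0<k)%N -> coprime (3*k) m ->
  pol1 k (c, 1) (x, y) = 0 -> (x = 0 /\ y = 0) \/ (x = c /\ y = 1).
Proof.
move=> hc hm hk hco H.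
have e1 : (pol1 k (c, 1) (x, y)).1 = 0 by rewrite H.
have e2 : (pol1 k (c, 1) (x, y)).2 = 0 by rewrite H.
rewrite /pol1 /= !expr1n !mul1r in e1 e2.
exact: (ker1 hc hm hk hco e1 e2).
Qed.

Lemma f2_norm (F : finFieldType) m k (c x y : F) : #|F| = (2^m)%N -> (0<m)%N -> (0<k)%N -> coprime (3*k) m -> odd m ->
  pol2 k (c, 1) (x, y) = 0 -> (x = 0 /\ y = 0) \/ (x = c /\ y = 1).
Proof.
move=> hc hm hk hco ho H.
have e1 : (pol2 k (c, 1) (x, y)).1 = 0 by rewrite H.
have e2 : (pol2 k (c, 1) (x, y)).2 = 0 by rewrite H.
rewrite /pol2 /pol1 /= !expr1n !mul1r in e1 e2.
exact: (ker2 hc hm hk hco ho e1 e2).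
Qed.

Local Close Scope ring_scope.

Theorem theorem4p8 (F : finFieldType) (m k : nat) :
  (0 < m)%N -> (0 < k)%N -> #|F| = (2 ^ m)%N ->
  (gcdn (3 * k) m = 1%N -> almost_3_to_1 (f1 (F:=F) k) /\ APN2 (f1 (F:=F) k)) /\
  (gcdn (3 * k) m = 1%N -> odd m -> almost_3_to_1 (f2 (F:=F) k) /\ APN2 (f2 (F:=F) k)).
Proof.
move=> hm hk hc; have h := card_char2 hc hm.
split.
- move=> hg; have hco : coprime (3 * k) m by rewrite /coprime hg.
  have [A B] : APN2 (f1 (F:=F) k) /\ almost_3_to_1 (f1 (F:=F) k).
    apply: (apn_a3 (pol := pol1 k) h).
    + by move=> z a; exact: f1_diff.
    + by move=> a w w'; exact: pol1_add.
    + apply: general_ker => //.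
      * by move=> t a1 a2 x y; exact: pol1_hom.
      * by move=> a w; exact: pol1_g.
      * by move=> c x y; exact: (f1_norm hc hm hk hco).
    + by move=> z; exact: f1_g.
    + exact: f1_0.
  by split.
- move=> hg ho; have hco : coprime (3 * k) m by rewrite /coprime hg.
  have [A B] : APN2 (f2 (F:=F) k) /\ almost_3_to_1 (f2 (F:=F) k).
    apply: (apn_a3 (pol := pol2 k) h).
    + by move=> z a; exact: f2_diff.
    + by move=> a w w'; exact: pol2_add.
    + apply: general_ker => //.
      * by move=> t a1 a2 x y; exact: pol2_hom.
      * by move=> a w; exact: pol2_g.
      * by move=> c x y; exact: (f2_norm hc hm hk hco ho).
    + by move=> z; exact: f2_g.
    + exact: f2_0.
  by split.
Qed.
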